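(* Let $\lambda$ be a nonempty partition, $A=\mathcal{D}(\lambda)$ and $\ell=d(\lambda)$. Then $$\mathbb{SG}(A)=\mathbb{SG}(A[1,1])=\mathbb{SG}(A[2,2])=\cdots=\mathbb{SG}(A[\ell-1,\ell-1]).$$
   Context: A partition is a finite non-increasing sequence $\lambda=(\lambda_1,\dots,\lambda_r)$ of positive integers. Its Durfee length is $d(\lambda)=\max\{k:\lambda_k\ge k\}$. For non-negative integers $i,j$, $\lambda[i,j]$ is $(\lambda_{i+1}-j,\dots,\lambda_r-j)$ with all non-positive entries removed. Downright: positions $\mathcal{D}(\mu)$, $\mu$ nonempty with $s$ parts; move to $\mathcal{D}(\mu[1,0])$ allowed iff $s>1$, move to $\mathcal{D}(\mu[0,1])$ allowed iff $\mu_1>1$. For $A=\mathcal{D}(\lambda)$ write $A[i,j]=\mathcal{D}(\lambda[i,j])$. Normal play; $\mathbb{SG}(A)=\operatorname{mex}\{\mathbb{SG}(B):A\to B\}$. *)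

(* Defs.v *)
From mathcomp Require Import all_boot.
Set Implicit Arguments. Unset Strict Implicit. Unset Printing Implicit Defensive.

Definition is_partition (lam : seq nat) : bool :=
  sorted geq lam && all (fun x => 0 < x) lam.

(* Durfee length d(lam) = max {k : lam_k >= k} (1-indexed; lam_k = nth 0 lam (k-1)). *)
Definition durfee (lam : seq nat) : nat :=
  \max_(i < size lam | i.+1 <= nth 0 lam i) i.+1.

(* lam[i,j] = (lam_{i+1} - j, ..., lam_r - j) with non-positive entries removed. *)
Definition pshift (lam : seq nat) (i j : nat) : seq nat :=
  filter (fun x => 0 < x) (map (fun x => x - j) (drop i lam)).

Definition mex (s : seq nat) : nat :=
  find (fun k => k \notin s) (iota 0 (size s).+1).

(* Options of Downright position D(mu):
   D(mu[1,0]) if mu has > 1 parts, D(mu[0,1]) if mu_1 > 1. *)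
Fixpoint sg_fuel (n : nat) (mu : seq nat) : nat :=
  match n with
  | 0 => 0
  | n'.+1 =>
      mex ((if 1 < size mu then [:: sg_fuel n' (pshift mu 1 0)] else [::]) ++
           (if 1 < head 0 mu then [:: sg_fuel n' (pshift mu 0 1)] else [::]))
  end.

(* Sprague-Grundy value of D(mu); fuel = number of cells, which strictly
   decreases along every move, so the recursion is exact. *)
Definition SG (mu : seq nat) : nat := sg_fuel (sumn mu) mu.

(* Main.v *)
Require Import Defs.
From mathcomp Require Import all_boot.

Definition allpos (s : seq nat) := all (fun x => 0 < x) s.

Lemma pshift_pos s i j : allpos (pshift s i j).
Proof. exact: filter_all. Qed.

Lemma sumn_fm s j : sumn [seq y <- [seq y - j | y <- s] | 0 < y] <= sumn s.
Proof.
elim: s => //= y s IH; case: ifP => _ /=.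
  exact: leq_add (leq_subr _ _) IH.
exact: leq_trans IH (leq_addl _ _).
Qed.

Lemma sumn_pshift10 {s} : allpos s -> 1 < size s -> sumn (pshift s 1 0) < sumn s.
Proof.
case: s => [|x s] //= /andP[x0 _] _.
rewrite /pshift /= drop0.
apply: leq_trans (_ : sumn s < x + sumn s); first by rewrite ltnS sumn_fm.
by rewrite -{1}(add0n (sumn s)) ltn_add2r.
Qed.

Lemma sumn_pshift01 {s} : allpos s -> 1 < head 0 s -> sumn (pshift s 0 1) < sumn s.
Proof.
case: s => [|x s] //= /andP[x0 _] hx.
rewrite /pshift /= ifT ?subn_gt0 //=.
rewrite -addSn; apply: leq_add; last exact: sumn_fm.
by rewrite subn1 prednK.
Qed.

Lemma fuel_ok n m s : allpos s -> sumn s <= n -> sumn s <= m -> sg_fuel n s = sg_fuel m s.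
Proof.
elim: n m s => [|n IH] m s ps.
  case: s ps => [|x s] //=; first by case: m.
  by case/andP=> x0 _; rewrite leqn0 addn_eq0 => /andP[/eqP x00]; rewrite x00 in x0.
case: m => [|m].
  case: s ps => [|x s] //=.
  by case/andP=> x0 _ _; rewrite leqn0 addn_eq0 => /andP[/eqP x00]; rewrite x00 in x0.
move=> hn hm /=.
case: ifP => h1; case: ifP => h2 //=.
- rewrite (IH m (pshift s 1 0) (pshift_pos _ _ _)); last 2 first.
    by rewrite -ltnS (leq_trans (sumn_pshift10 ps h1)).
    by rewrite -ltnS (leq_trans (sumn_pshift10 ps h1)).
  rewrite (IH m (pshift s 0 1) (pshift_pos _ _ _)) //.
    by rewrite -ltnS (leq_trans (sumn_pshift01 ps h2)).
    by rewrite -ltnS (leq_trans (sumn_pshift01 ps h2)).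
- rewrite (IH m (pshift s 1 0) (pshift_pos _ _ _)) //.
    by rewrite -ltnS (leq_trans (sumn_pshift10 ps h1)).
    by rewrite -ltnS (leq_trans (sumn_pshift10 ps h1)).
- rewrite (IH m (pshift s 0 1) (pshift_pos _ _ _)) //.
    by rewrite -ltnS (leq_trans (sumn_pshift01 ps h2)).
    by rewrite -ltnS (leq_trans (sumn_pshift01 ps h2)).
Qed.

Lemma SG_eq s : allpos s -> SG s =
  mex ((if 1 < size s then [:: SG (pshift s 1 0)] else [::]) ++
       (if 1 < head 0 s then [:: SG (pshift s 0 1)] else [::])).
Proof.
move=> ps; rewrite /SG.
case: s ps => [|x s] ps; first by [].
have: 0 < sumn (x :: s) by case/andP: ps => x0 _ /=; rewrite ltn_addr.
case E: (sumn (x :: s)) => [|n] // _ /=.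
rewrite -/(sumn (x::s)) in E.
case: ifP => h1; case: ifP => h2 //=.
- rewrite (@fuel_ok n (sumn (pshift (x::s) 1 0)) _ (pshift_pos _ _ _)) //; last
    by rewrite -ltnS -E sumn_pshift10.
  rewrite (@fuel_ok n (sumn (pshift (x::s) 0 1)) _ (pshift_pos _ _ _)) //.
    by rewrite -ltnS -E sumn_pshift01.
- rewrite (@fuel_ok n (sumn (pshift (x::s) 1 0)) _ (pshift_pos _ _ _)) //.
    by rewrite -ltnS -E sumn_pshift10.
- rewrite (@fuel_ok n (sumn (pshift (x::s) 0 1)) _ (pshift_pos _ _ _)) //.
    by rewrite -ltnS -E sumn_pshift01.
Qed.

Lemma mex0 : mex [::] = 0. Proof. by []. Qed.
Lemma mex1 x : mex [:: x] = (x == 0). Proof. by case: x => [|[|x]]. Qed.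
Lemma mex2 x y : mex [:: x; y] =
  if (x != 0) && (y != 0) then 0 else if (x != 1) && (y != 1) then 1 else 2.
Proof. by case: x => [|[|[|x]]]; case: y => [|[|[|y]]]. Qed.

Definition F (t : seq nat) := [seq y <- [seq y - 1 | y <- t] | 0 < y].

Lemma part_pshift s i j : is_partition s -> is_partition (pshift s i j).
Proof.
case/andP=> ss _; apply/andP; split; last exact: pshift_pos.
apply: sorted_filter; first by move=> x y z h1 h2; exact: leq_trans h2 h1.
apply: (homo_sorted (e := geq)); first by move=> x y h; exact: leq_sub2r.
exact: drop_sorted.
Qed.

Lemma allpos_filter s : allpos s -> [seq y <- s | 0 < y] = s.
Proof. by move/all_filterP. Qed.

Lemma map_sub0 s : [seq y - 0 | y <- s] = s.
Proof. by elim: s => //= y s ->; rewrite subn0. Qed.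

Lemma p10 s : allpos s -> pshift s 1 0 = behead s.
Proof.
case: s => [|x s] //= /andP[_ ps]; by rewrite /pshift /= drop0 map_sub0 allpos_filter.
Qed.

Lemma p01 a t : 1 < a -> pshift (a :: t) 0 1 = (a - 1) :: F t.
Proof. by move=> ha; rewrite /pshift /= ifT // subn_gt0. Qed.

Lemma p11 a b t : 1 < b -> pshift (a :: b :: t) 1 1 = (b - 1) :: F t.
Proof. by move=> hb; rewrite /pshift /= ifT // subn_gt0. Qed.

Lemma F_ones t : all (pred1 1) t -> F t = [::].
Proof. by elim: t => //= x t IH /andP[/eqP -> /IH]. Qed.

Lemma ones_pos {s} : all (pred1 1) s -> allpos s.
Proof. by elim: s => //= x s IH /andP[/eqP -> /IH]. Qed.

Lemma col s : all (pred1 1) s -> SG s = odd (size s).-1.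
Proof.
elim: s => [|x s IH] //= /andP[/eqP -> h1].
rewrite SG_eq /=; last by apply: ones_pos; rewrite /= ?h1.
case: s IH h1 => [|y s] //= IH h1.
rewrite p10 /=; last by apply: (@ones_pos (1::y::s)); rewrite /= ?h1.
rewrite mex1 IH //=; by case: (odd (size s)).
Qed.

Lemma row n : SG [:: n] = odd n.-1.
Proof.
elim: n => [|n IH]; first by [].
rewrite SG_eq /=; last by case: n {IH}.
case: n IH => [|n] IH //=.
rewrite p01 // /F /= subn1 /= IH mex1 /=; by case: (odd n).
Qed.

Lemma hook a t : 1 < a -> t != [::] -> all (pred1 1) t ->
  SG (a :: t) = mex [:: (odd (size t).-1 : nat); (odd (a - 2) : nat)].
Proof.
move=> ha tn ht.
have pt := ones_pos ht.
rewrite SG_eq /=; last by rewrite pt andbT ltnW.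
rewrite ifT; last by case: t tn {ht pt}.
rewrite ifT // p10 /= ?pt ?andbT ?(ltnW ha) // p01 // F_ones // row col //.
by rewrite subn1 -subn2.
Qed.

Lemma geq_trans : transitive geq.
Proof. by move=> x y z h1 h2; exact: leq_trans h2 h1. Qed.

Lemma F_le2 {t} : all (fun x => x <= 2) t -> all (pred1 1) (F t).
Proof. by elim: t => //= x t IH /andP[hx /IH h]; case: x hx => [|[|[|x]]] //=. Qed.

Lemma step mu : is_partition mu -> 1 < nth 0 mu 1 -> SG mu = SG (pshift mu 1 1).
Proof.
have [n hn] := ubnP (sumn mu); elim: n mu hn => // n IH mu hn hp h2.
rewrite ltnS in hn.
have ps : allpos mu by case/andP: hp.
have IHB := IH (pshift mu 1 0) (leq_trans (sumn_pshift10 ps _) hn) (part_pshift _ _ _ hp).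
have IHC := IH (pshift mu 0 1) (leq_trans (sumn_pshift01 ps _) hn) (part_pshift _ _ _ hp).
case: mu hn hp h2 ps IHB IHC => [|a [|b rest]] // hn hp /= hb ps IHB IHC.
case/andP: hp => /= /andP[hab srt] _.
case/and3P: ps => a0 b0 prest.
have hrb : all (fun x => x <= b) rest by exact: (order_path_min geq_trans srt).
have ha : 1 < a by exact: leq_trans hb hab.
have ps : allpos [:: a, b & rest] by rewrite /allpos /= a0 b0.
have Fb : F (b :: rest) = (b - 1) :: F rest by rewrite /F /= ifT // subn_gt0.
rewrite p11 // SG_eq //= ha p10 // p01 // Fb.
rewrite p10 // p01 // Fb in IHB IHC.
rewrite /= in IHB.
have {}IHC := IHC ha; rewrite /= in IHC.
rewrite /=.
have pF : allpos (F rest) by rewrite /F; exact: filter_all.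
have [ones | [c [r [Er hc]]]] : all (pred1 1) rest \/ exists c r, rest = c :: r /\ 1 < c.
  case: (rest) srt prest => [|c r] srt prest; first by left.
  case: (ltnP 1 c) => hc; first by right; exists c, r.
  left; case/andP: srt => _ srt'.
  have hr := order_path_min geq_trans srt'.
  case/andP: prest => c0 pr.
  rewrite /= (_ : c == 1) /=; last by rewrite eqn_leq hc c0.
  apply/allP => x xr; move/allP: hr => /(_ x xr) hx; move/allP: pr => /(_ x xr) x0.
  by rewrite /= eqn_leq x0 (leq_trans hx hc).
- rewrite F_ones // row.
  have [eb|b3] : b = 2 \/ 2 < b.
    by case: (ltnP 2 b) => b3; [right | left; apply/eqP; rewrite eqn_leq b3 hb].
  + subst b.
    have h1 : SG [:: a - 1; 2 - 1] != 0.
      case: (ltnP 2 a) => a3.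
        rewrite hook //; last by rewrite ltn_subRL.
      have -> : a = 2 by apply/eqP; rewrite eqn_leq a3 ha.
      by rewrite col.
    have h2 : SG (2 :: rest) != 0.
      case: (rest) ones => [|x t] ones; first by rewrite row.
      by rewrite hook // mex2 subnn andbF; case: ifP.
    by rewrite mex2 h1 h2.
  + rewrite F_ones // in IHC.
    have [b' eb] : exists b', b = b'.+3 by exists (b - 3); rewrite -addn3 subnK.
    subst b.
    rewrite IHC // p11 // /F /= row.
    rewrite !subSS !subn0 /=.
    case: (rest) ones => [|x t] ones.
      rewrite row /= mex2; by case: (odd b').
    rewrite hook // !subSS !subn0 /= !mex2.
    by case: (odd b'); case: (odd _).
- subst rest.
  have Fc : F (c :: r) = (c - 1) :: F r by rewrite /F /= ifT // subn_gt0.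
  rewrite p11 // in IHB; rewrite IHB //.
  rewrite Fc in IHC *.
  have pFr : allpos (F r) by rewrite /F; exact: filter_all.
  have [eb|b3] : b = 2 \/ 2 < b.
    by case: (ltnP 2 b) => b3; [right | left; apply/eqP; rewrite eqn_leq b3 hb].
  + subst b.
    have hc2 : c = 2 by move: (hrb) => /andP[hc2 _]; apply/eqP; rewrite eqn_leq hc2 hc.
    subst c.
    case/andP: hrb => _ hr.
    have o : all (pred1 1) (F r) := F_le2 hr.
    case: (ltnP 2 a) => a3.
      have [a' ea] : exists a', a = a'.+3 by exists (a - 3); rewrite -addn3 subnK.
      subst a.
      rewrite (@hook (a'.+3 - 1)) //= ?o // (@col (2 - 1 :: F r)) /= ?o // (@col [:: 2 - 1, 2 - 1 & F r]) /= ?o // !subSS !subn0 !mex2.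
      by case: (odd _); case: (odd a').
    have -> : a = 2 by apply/eqP; rewrite eqn_leq a3 ha.
    rewrite !col /= ?o // mex2.
    by case: (odd _).
  + rewrite IHC; last by rewrite ltn_subRL.
    rewrite p11; last by rewrite ltn_subRL.
    rewrite [in RHS]SG_eq; last by apply/and3P; split => //; rewrite subn_gt0.
    rewrite /= ifT; last by rewrite ltn_subRL.
    rewrite p10; last by apply/and3P; split => //; rewrite subn_gt0.
    rewrite p01 //=; by rewrite ltn_subRL.
Qed.

Lemma durfee_nth {lam k} : is_partition lam -> k < durfee lam -> k.+1 <= nth 0 lam k.
Proof.
case/andP=> srt _ hk; rewrite ltnNge; apply/negP => hn.
move: hk; apply/negP; rewrite -leqNgt.
apply/bigmax_leqP => i hi.
rewrite ltnNge; apply/negP => hki.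
have il := ltn_ord i.
have kl : k < size lam by apply: leq_ltn_trans hki il.
have := @sorted_leq_nth _ geq geq_trans leqnn 0 lam srt k i; rewrite !inE => /(_ kl il hki).
rewrite /= => h.
have := leq_trans hi h.
by rewrite ltnNge (leq_trans hn hki).
Qed.

Lemma fm1 s j : [seq y <- [seq y - 1 | y <- [seq y <- [seq y - j | y <- s] | 0 < y]] | 0 < y]
  = [seq y <- [seq y - j.+1 | y <- s] | 0 < y].
Proof.
elim: s => //= x s IH.
have e : x - j.+1 = x - j - 1 by rewrite -subnDA addn1.
rewrite e; case: (posnP (x - j)) => [->|h] /=; rewrite ?h /= IH //.
Qed.

Lemma comp lam j : j < nth 0 lam j -> pshift (pshift lam j j) 1 1 = pshift lam j.+1 j.+1.
Proof.
move=> hj.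
have jl : j < size lam by rewrite ltnNge; apply/negP => h; rewrite nth_default // in hj.
rewrite /pshift (drop_nth 0 jl) /= ifT ?subn_gt0 //= drop0.
exact: fm1.
Qed.

Lemma nth1 lam j : j.+2 <= nth 0 lam j.+1 -> j < nth 0 lam j ->
  nth 0 (pshift lam j j) 1 = nth 0 lam j.+1 - j.
Proof.
move=> h1 hj.
have jl : j.+1 < size lam by rewrite ltnNge; apply/negP => h; rewrite nth_default // in h1.
rewrite /pshift (drop_nth 0 (ltnW jl)) (drop_nth 0 jl) /= ifT ?subn_gt0 //= ifT //.
by apply: leq_trans h1; rewrite ltnW.
Qed.

Theorem mainTheorem7 (lam : seq nat) :
  is_partition lam -> lam != [::] ->
  forall i : nat, i < durfee lam -> SG (pshift lam i i) = SG lam.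
Proof.
move=> hp _; elim=> [|i IH] hi.
  rewrite /pshift drop0 map_sub0 allpos_filter //; by case/andP: hp.
have hi0 := durfee_nth hp (ltnW hi).
have hi1 := durfee_nth hp hi.
rewrite -comp // -step ?IH ?(ltnW hi) //; first exact: part_pshift.
rewrite nth1 //.
rewrite ltn_subRL.
by rewrite addn1.
Qed.
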